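(* (1) There exists an infinite family of connected subcubic graphs $G$, each containing a pair of open twins of degree $1$, such that $\gamma^{LD}(G)>\frac{n(G)}{2}$. (2) There exists an infinite family of connected subcubic graphs $G$, each containing a pair of open twins of degree $2$, such that $\gamma^{LD}(G)>\frac{n(G)}{2}$.
   Context: All graphs are finite and simple; $n(G)$ is the number of vertices. A graph is subcubic if every vertex has degree at most $3$. Two distinct vertices $u,v$ are open twins of degree $d$ if $N(u)=N(v)$ and $|N(u)|=d$. For $S\subseteq V(G)$, $I(v)=N[v]\cap S$. A set $S$ is locating-dominating if every vertex $v$ has $I(v)\ne\emptyset$ and $I(u)\neq I(v)$ for all distinct $u,v\in V(G)\setminus S$. $\gamma^{LD}(G)$ denotes the minimum size of a locating-dominating set of $G$. *)

(* Defs.v *)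
From mathcomp Require Import all_boot.
Set Implicit Arguments. Unset Strict Implicit. Unset Printing Implicit Defensive.

(* A finite simple graph on the finite vertex type T, given by an adjacency
   relation e that is symmetric and irreflexive. n(G) = #|T|. *)
Definition simple_graph (T : finType) (e : rel T) : Prop :=
  symmetric e /\ irreflexive e.

Section Graphs.
Variables (T : finType) (e : rel T).

Definition onbhd (v : T) : {set T} := [set u | e v u].
Definition cnbhd (v : T) : {set T} := v |: onbhd v.

Definition subcubic : Prop := forall v, #|onbhd v| <= 3.

Definition connected_graph : Prop := forall u v, connect e u v.

Definition open_twins (d : nat) (u v : T) : Prop :=
  u != v /\ onbhd u = onbhd v /\ #|onbhd u| = d.

Definition Iset (S : {set T}) (v : T) : {set T} := cnbhd v :&: S.

Definition locating_dominatingb (S : {set T}) : bool :=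
  [forall v, Iset S v != set0] &&
  [forall u, forall v, (u \notin S) ==> (v \notin S) ==> (u != v) ==>
                        (Iset S u != Iset S v)].

(* gamma^LD(G): size of a minimum locating-dominating set
   (V(G) itself is always locating-dominating, so the arg min is well defined). *)
Definition gammaLD : nat :=
  #|[arg min_(S < [set: T] | locating_dominatingb S) #|S|]|.

End Graphs.

(* Main.v *)
Require Import Defs.
From mathcomp Require Import all_boot zify.
Set Implicit Arguments. Unset Strict Implicit. Unset Printing Implicit Defensive.

Definition TT (G : finType) (k : nat) : finType := (G + 'I_k.+1 * bool)%type.

Definition EE (G : finType) (eg : rel G) (c : G) (k : nat) : rel (TT G k) :=
  fun a b => match a, b with
  | inl x, inl y => eg x y
  | inl x, inr p => (x == c) && p.2 && (val p.1 == 0)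
  | inr p, inl y => (y == c) && p.2 && (val p.1 == 0)
  | inr p, inr q => ((p.1 == q.1) && (p.2 != q.2)) ||
        [&& p.2, q.2 & ((val q.1 == (val p.1).+1) || (val p.1 == (val q.1).+1))]
  end.

Arguments EE {G} eg c k.
Lemma EE_sym (G : finType) (eg : rel G) c k : symmetric eg -> symmetric (EE eg c k).
Proof.
move=> hs [x|[i b]] [y|[j b']] //=; try by rewrite hs.
rewrite [j == i]eq_sym [(val i == (val j).+1) || _]orbC.
by case: b b' => [] [].
Qed.

Lemma EE_irr (G : finType) (eg : rel G) c k : irreflexive eg -> irreflexive (EE eg c k).
Proof.
move=> hi [x|[i b]] /=; first exact: hi.
rewrite eqxx /= eqxx /=. by case: b => //=; rewrite orbb ltn_eqF.
Qed.

Lemma EE_lift (G : finType) (eg : rel G) c k x y :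
  connect eg x y -> connect (EE eg c k) (inl x) (inl y).
Proof.
move/connectP=> [p pth ->]; apply/connectP; exists (map inl p); last by rewrite last_map.
by rewrite path_map.
Qed.

Lemma spine_conn (G : finType) (eg : rel G) c k n (H : n < k.+1) :
  connect (EE eg c k) (inl c) (inr (Ordinal H, true)).
Proof.
elim: n H => [|n IH] H; first by apply: connect1; rewrite /= eqxx.
have H' : n < k.+1 by apply: ltnW.
apply: connect_trans (IH H') (connect1 _).
by rewrite /= eqxx orbT.
Qed.

Lemma EE_conn (G : finType) (eg : rel G) c k :
  symmetric eg -> (forall x, connect eg c x) -> connected_graph (EE eg c k).
Proof.
move=> hs hc.
have base : forall t, connect (EE eg c k) (inl c) t.
  move=> [x|[[n H] b]]; first exact: EE_lift.
  case: b; first exact: spine_conn.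
  apply: connect_trans (@spine_conn _ eg c k n H) (connect1 _).
  by rewrite /= eqxx.
move=> u v; apply: connect_trans (base v).
by rewrite (sym_connect_sym (@EE_sym _ eg c k hs)).
Qed.


Lemma cardU_le (T : finType) (A B : {set T}) : #|A :|: B| <= #|A| + #|B|.
Proof. by rewrite cardsU leq_subr. Qed.

Lemma card3le (T : finType) (a b d : T) : #|[set a; b; d]| <= 3.
Proof.
apply: (leq_trans (cardU_le _ _)); rewrite cards1 cards2 addn1.
by case: (a != b).
Qed.

Lemma EE_subcubic (G : finType) (eg : rel G) c k :
  (forall x, #|onbhd eg x| + (x == c) <= 3) -> subcubic (EE eg c k).
Proof.
move=> hd [x|[i b]].
- apply: (leq_trans _ (hd x)).
  have sub : onbhd (EE eg c k) (inl x) \subset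
     (inl @: onbhd eg x) :|: (if x == c then [set inr (ord0, true)] else set0).
    apply/subsetP => t; rewrite inE; case: t => [y|[j b]] /= H.
      by rewrite inE imset_f // inE.
    move: H => /andP[/andP[/eqP xc bt] j0]; rewrite xc eqxx inE; apply/orP; right.
    rewrite inE bt; apply/eqP; congr (inr (_, _)); apply: val_inj; exact/eqP.
  apply: leq_trans (subset_leq_card sub) _; apply: leq_trans (cardU_le _ _) _.
  apply: leq_add; first exact: leq_imset_card.
  by case: (x == c); rewrite ?cards1 ?cards0.
- case: b.
  + pose prev : TT G k := if val i == 0 then inl c else inr (insubd i i.-1, true).
    apply: (leq_trans _ (card3le (inr (i, false)) (inr (insubd i i.+1, true)) prev)).
    apply: subset_leq_card; apply/subsetP => t; rewrite inE; case: t => [y|[j b]] /= H.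
      move: H => /andP[/andP[/eqP -> _] i0]; by rewrite /prev i0 !inE eqxx !orbT.
    case/orP: H => [/andP[/eqP <- bb]|/andP[bt /orP[/eqP ji|/eqP ij]]].
      by case: b bb => // _; rewrite !inE eqxx.
    rewrite !inE; apply/orP; left; apply/orP; right; rewrite bt; apply/eqP.
      congr (inr (_, _)); apply: val_inj; rewrite insubdK; first exact: ji.
      by rewrite unfold_in /= -ji ltn_ord.
    rewrite /prev ij /= !inE bt; apply/orP; right; apply/eqP.
    rewrite ij /=; congr (inr (_, _)); apply: val_inj; rewrite insubdK //.
    by rewrite unfold_in /=; apply: leq_trans (ltnSn _) _; rewrite -ij ltnW.
  + apply: (@leq_trans #|[set inr (i, true) : TT G k]|); last by rewrite cards1.
    apply: subset_leq_card; apply/subsetP => t; rewrite !inE; case: t => [y|[j b]] /= H.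
      by move: H; rewrite !andbF.
    rewrite orbF in H; case/andP: H => /eqP <- bb.
    by case: b bb => // _; rewrite eqxx.
Qed.

Definition Pg (G : finType) (eg : rel G) (c : G) (A : {set G}) : Prop :=
  (forall a, a != c -> Iset eg A a != set0) /\
  (forall a b, a != c -> b != c -> a \notin A -> b \notin A -> a != b ->
     Iset eg A a != Iset eg A b).

Lemma Iset_inl (G : finType) (eg : rel G) c k (S : {set TT G k}) a : a != c ->
  Iset (EE eg c k) S (inl a) = inl @: Iset eg [set x | inl x \in S] a.
Proof.
move=> ac; apply/setP => t; case: t => [y|p].
  rewrite mem_imset; last by move=> ? ? [].
  by rewrite /Iset /cnbhd !inE.
rewrite /Iset /cnbhd !inE /= (negbTE ac) /=.
by apply/esym/imsetP => [[x _]].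
Qed.

Lemma onbhd_inl (G : finType) (eg : rel G) c k a : a != c ->
  onbhd (EE eg c k) (inl a) = inl @: onbhd eg a.
Proof.
move=> ac; apply/setP => t; case: t => [y|p].
  rewrite mem_imset; last by move=> ? ? [].
  by rewrite /onbhd !inE.
rewrite /onbhd !inE /= (negbTE ac) /=.
by apply/esym/imsetP => [[x _]].
Qed.

Lemma LD_Pg (G : finType) (eg : rel G) c k (S : {set TT G k}) :
  locating_dominatingb (EE eg c k) S -> Pg eg c [set x | inl x \in S].
Proof.
move/andP=> [/forallP H1 /forallP H2]; split.
  move=> a ac; have := H1 (inl a); rewrite Iset_inl //.
  by apply: contra => /eqP ->; rewrite imset0.
move=> a b ac bc aS bS ab.
have := H2 (inl a) => /forallP /(_ (inl b)).
rewrite !inE in aS bS; rewrite aS bS /= ab /= !Iset_inl //.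
by apply: contra => /eqP ->.
Qed.

Lemma LD_spine (G : finType) (eg : rel G) c k (S : {set TT G k}) :
  locating_dominatingb (EE eg c k) S -> k.+1 <= #|[set p | inr p \in S]|.
Proof.
move/andP=> [/forallP H1 _].
apply: leq_trans (leq_imset_card fst _).
rewrite -{1}(card_ord k.+1) -cardsT; apply: subset_leq_card; apply/subsetP => i _.
have /set0Pn [t] := H1 (inr (i, false)).
rewrite /Iset /cnbhd !inE; case: t => [y|[j b]] /=; first by rewrite !andbF.
case/andP => /orP[/eqP [-> ->] tS|H tS].
  by apply/imsetP; exists (i, false); rewrite ?inE.
move: H; rewrite /= orbF => /andP[/eqP -> _].
by apply/imsetP; exists (j, b); rewrite ?inE.
Qed.

Lemma card_split (G : finType) k (S : {set TT G k}) :
  #|[set x | inl x \in S]| + #|[set p | inr p \in S]| <= #|S|.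
Proof.
set A := [set x | inl x \in S]; set B := [set p | inr p \in S].
have il : injective (@inl G ('I_k.+1 * bool)) by move=> ? ? [].
have ir : injective (@inr G ('I_k.+1 * bool)) by move=> ? ? [].
rewrite -(card_imset A il) -(card_imset B ir) -cardsUI.
have -> : (inl @: A) :&: (inr @: B) = set0.
  apply/setP => t; rewrite !inE.
  apply/negbTE/negP => /andP[/imsetP[x _ ->] /imsetP[y _]] //.
rewrite cards0 addn0; apply: subset_leq_card; apply/subsetP => t.
by case/setUP => /imsetP[x]; rewrite inE => h ->.
Qed.

Lemma LD_setT (T : finType) (e : rel T) : locating_dominatingb e setT.
Proof.
apply/andP; split; apply/forallP => v.
  by apply/set0Pn; exists v; rewrite !inE eqxx.
by apply/forallP => w; rewrite in_setT.
Qed.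

Lemma gamma_lb (G : finType) (eg : rel G) c k m :
  (forall A, Pg eg c A -> m <= #|A|) -> m + k.+1 <= gammaLD (EE eg c k).
Proof.
move=> hm; rewrite /gammaLD.
case: (@arg_minnP _ setT (fun S : {set TT G k} => locating_dominatingb (EE eg c k) S) (fun S => #|S|) (LD_setT _)) => S HS _.
apply: leq_trans (card_split S); apply: leq_add; first exact/hm/LD_Pg.
exact: LD_spine HS.
Qed.

Lemma card_TT (G : finType) k : #|TT G k| = #|G| + (k.+1).*2.
Proof. by rewrite card_sum card_prod card_ord card_bool muln2. Qed.


Lemma mem_Iset (T : finType) (e : rel T) A a t :
  (t \in Iset e A a) = ((t == a) || e a t) && (t \in A).
Proof. by rewrite !inE. Qed.

Lemma two_le (T : finType) (A : {set T}) x y : x != y -> x \in A -> y \in A -> 2 <= #|A|.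
Proof.
move=> xy xA yA; have := subset_leq_card (_ : [set x; y] \subset A).
rewrite cards2 xy; apply; apply/subsetP => t; rewrite !inE => /orP[] /eqP ->//.
Qed.

Definition adj3 (a b : nat) : bool :=
  match a, b with 0, 2 | 2, 0 | 1, 2 | 2, 1 => true | _, _ => false end.
Definition eg3 : rel 'I_3 := fun x y => adj3 x y.
Definition p0 : 'I_3 := @Ordinal 3 0 isT.
Definition p1 : 'I_3 := @Ordinal 3 1 isT.
Definition p2 : 'I_3 := @Ordinal 3 2 isT.

Lemma ord3_cases x : x = p0 \/ x = p1 \/ x = p2.
Proof.
case: x => [[|[|[|m]]] H]; [left|right;left|right;right|by []]; exact: val_inj.
Qed.

Ltac c3 x := case: (ord3_cases x) => [->|[->|->]].

Lemma eg3_sym : symmetric eg3. Proof. by move=> x y; c3 x; c3 y. Qed.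
Lemma eg3_irr : irreflexive eg3. Proof. by move=> x; c3 x. Qed.
Lemma eg3_conn x : connect eg3 p2 x.
Proof. by c3 x; [apply: connect1 | apply: connect1 | apply: connect0]. Qed.
Lemma eg3_deg x : #|onbhd eg3 x| + (x == p2) <= 3.
Proof.
c3 x.
- apply: (@leq_trans (#|[set p2]| + 0)); last by rewrite cards1.
  apply: leq_add => //; apply: subset_leq_card; apply/subsetP => y.
  by rewrite !inE; c3 y.
- apply: (@leq_trans (#|[set p2]| + 0)); last by rewrite cards1.
  apply: leq_add => //; apply: subset_leq_card; apply/subsetP => y.
  by rewrite !inE; c3 y.
- apply: (@leq_trans (#|[set p0; p1]| + 1)); last by rewrite cards2.
  apply: leq_add => //; apply: subset_leq_card; apply/subsetP => y.
  by rewrite !inE; c3 y.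
Qed.

Lemma eg3_lb A : Pg eg3 p2 A -> 2 <= #|A|.
Proof.
move=> [P1 P2].
have C1 : (p0 \in A) || (p1 \in A).
  apply/negPn/negP; rewrite negb_or => /andP[h0 h1].
  have := P2 p0 p1 isT isT h0 h1 isT; apply/negP/negPn/eqP/setP => t.
  rewrite !mem_Iset; c3 t => //=; by rewrite ?(negbTE h0) ?(negbTE h1).
have C2 : (p0 \in A) || (p2 \in A).
  apply/negPn/negP; rewrite negb_or => /andP[h0 h1].
  have := P1 p0 isT; apply/negP/negPn/eqP/setP => t.
  rewrite mem_Iset inE; c3 t => //=; by rewrite ?(negbTE h0) ?(negbTE h1).
have C3 : (p1 \in A) || (p2 \in A).
  apply/negPn/negP; rewrite negb_or => /andP[h0 h1].
  have := P1 p1 isT; apply/negP/negPn/eqP/setP => t.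
  rewrite mem_Iset inE; c3 t => //=; by rewrite ?(negbTE h0) ?(negbTE h1).
case h0 : (p0 \in A) in C1 C2; case h1 : (p1 \in A) in C1 C3;
  case h2 : (p2 \in A) in C2 C3 => //.
- exact: (@two_le _ A p0 p1).
- exact: (@two_le _ A p0 p1).
- exact: (@two_le _ A p0 p2).
- exact: (@two_le _ A p1 p2).
Qed.

Lemma eg3_nb0 : onbhd eg3 p0 = [set p2].
Proof. by apply/setP => t; rewrite !inE; c3 t. Qed.
Lemma eg3_nb1 : onbhd eg3 p1 = [set p2].
Proof. by apply/setP => t; rewrite !inE; c3 t. Qed.

Lemma part1 : forall N : nat, exists (T : finType) (e : rel T),
     simple_graph e /\ connected_graph e /\ subcubic e /\
         N < #|T| /\
         (exists u v : T, open_twins e 1 u v) /\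
         #|T| < 2 * gammaLD e.
Proof.
move=> N; exists (TT 'I_3 N), (EE eg3 p2 N).
have lb := @gamma_lb _ eg3 p2 N 2 eg3_lb.
have cT := card_TT 'I_3 N; rewrite card_ord -muln2 in cT.
split; first by split; [exact: EE_sym eg3_sym | exact: EE_irr eg3_irr].
split; first exact: EE_conn eg3_sym eg3_conn.
split; first exact: EE_subcubic eg3_deg.
split; first by rewrite cT; lia.
split; last by rewrite cT; apply: (leq_trans _ (leq_mul (leqnn 2) lb)); lia.
exists (inl p0), (inl p1); split => //.
rewrite !onbhd_inl // eg3_nb0 eg3_nb1; split => //.
by rewrite card_imset ?cards1 //; move=> ? ? [].
Qed.


Lemma mem_Iset' (T : finType) (e : rel T) A a t :
  (t \in Iset e A a) = ((t == a) || e a t) && (t \in A).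
Proof. by rewrite !inE. Qed.

Lemma three_le (T : finType) (A : {set T}) x y z : x != y -> x != z -> y != z ->
  x \in A -> y \in A -> z \in A -> 3 <= #|A|.
Proof.
move=> xy xz yz xA yA zA.
have := subset_leq_card (_ : x |: (y |: [set z]) \subset A).
rewrite !cardsU1 cards1 !inE negb_or xy xz yz; apply.
by apply/subsetP => t; rewrite !inE => /orP[/eqP ->|/orP[] /eqP ->].
Qed.

Definition adj5 (a b : nat) : bool :=
  match a, b with 0, 2 | 2, 0 | 0, 3 | 3, 0 | 1, 2 | 2, 1 | 1, 3 | 3, 1 | 3, 4 | 4, 3 => true
  | _, _ => false end.
Definition eg5 : rel 'I_5 := fun x y => adj5 x y.
Definition q0 : 'I_5 := @Ordinal 5 0 isT.
Definition q1 : 'I_5 := @Ordinal 5 1 isT.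
Definition q2 : 'I_5 := @Ordinal 5 2 isT.
Definition q3 : 'I_5 := @Ordinal 5 3 isT.
Definition q4 : 'I_5 := @Ordinal 5 4 isT.

Lemma ord5_cases x : x = q0 \/ x = q1 \/ x = q2 \/ x = q3 \/ x = q4.
Proof.
case: x => [[|[|[|[|[|m]]]]] H];
  [left|right;left|right;right;left|right;right;right;left|right;right;right;right|by []];
  exact: val_inj.
Qed.

Ltac c5 x := case: (ord5_cases x) => [->|[->|[->|[->|->]]]].

Lemma eg5_sym : symmetric eg5. Proof. by move=> x y; c5 x; c5 y. Qed.
Lemma eg5_irr : irreflexive eg5. Proof. by move=> x; c5 x. Qed.
Lemma eg5_conn x : connect eg5 q2 x.
Proof.
have h0 : connect eg5 q2 q0 by apply: connect1.
have h3 : connect eg5 q2 q3 by apply: connect_trans h0 (connect1 _).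
c5 x; [exact: h0 | by apply: connect1 | exact: connect0 | exact: h3 |].
exact: connect_trans h3 (connect1 _).
Qed.

Lemma deg_help (x : 'I_5) (s : {set 'I_5}) : (forall y, eg5 x y -> y \in s) ->
  #|s| + (x == q2) <= 3 -> #|onbhd eg5 x| + (x == q2) <= 3.
Proof.
move=> H; apply: leq_trans; rewrite leq_add2r; apply: subset_leq_card.
by apply/subsetP => y; rewrite inE; apply: H.
Qed.

Lemma eg5_deg x : #|onbhd eg5 x| + (x == q2) <= 3.
Proof.
c5 x.
- apply: (@deg_help _ [set q2; q3]); last by rewrite cards2.
  by move=> y; c5 y; rewrite // !inE.
- apply: (@deg_help _ [set q2; q3]); last by rewrite cards2.
  by move=> y; c5 y; rewrite // !inE.
- apply: (@deg_help _ [set q0; q1]); last by rewrite cards2.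
  by move=> y; c5 y; rewrite // !inE.
- apply: (@deg_help _ [set q0; q1; q4]); last by rewrite addn0 card3le.
  by move=> y; c5 y; rewrite // !inE.
- apply: (@deg_help _ [set q3]); last by rewrite cards1.
  by move=> y; c5 y; rewrite // !inE.
Qed.

Ltac kill h := by rewrite ?(negbTE h).

Lemma eg5_lb A : Pg eg5 q2 A -> 3 <= #|A|.
Proof.
move=> [P1 P2].
have C1 : (q3 \in A) || (q4 \in A).
  apply/negPn/negP; rewrite negb_or => /andP[h0 h1].
  have := P1 q4 isT; apply/negP/negPn/eqP/setP => t.
  rewrite mem_Iset' inE; c5 t => //=; by rewrite ?(negbTE h0) ?(negbTE h1).
have C2 : (q0 \in A) || (q1 \in A).
  apply/negPn/negP; rewrite negb_or => /andP[h0 h1].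
  have := P2 q0 q1 isT isT h0 h1 isT; apply/negP/negPn/eqP/setP => t.
  rewrite !mem_Iset'; c5 t => //=; by rewrite ?(negbTE h0) ?(negbTE h1).
have C3 : [|| q0 \in A, q2 \in A | q3 \in A].
  apply/negPn/negP; rewrite !negb_or => /and3P[h0 h1 h2].
  have := P1 q0 isT; apply/negP/negPn/eqP/setP => t.
  rewrite mem_Iset' inE; c5 t => //=; by rewrite ?(negbTE h0) ?(negbTE h1) ?(negbTE h2).
have C4 : [|| q1 \in A, q2 \in A | q3 \in A].
  apply/negPn/negP; rewrite !negb_or => /and3P[h0 h1 h2].
  have := P1 q1 isT; apply/negP/negPn/eqP/setP => t.
  rewrite mem_Iset' inE; c5 t => //=; by rewrite ?(negbTE h0) ?(negbTE h1) ?(negbTE h2).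
have C5 : [|| q1 \in A, q4 \in A | q2 \in A].
  apply/negPn/negP; rewrite !negb_or => /and3P[h0 h1 h2].
  have := P2 q1 q4 isT isT h0 h1 isT; apply/negP/negPn/eqP/setP => t.
  rewrite !mem_Iset'; c5 t => //=; by rewrite ?(negbTE h0) ?(negbTE h1) ?(negbTE h2).
have C6 : [|| q0 \in A, q4 \in A | q2 \in A].
  apply/negPn/negP; rewrite !negb_or => /and3P[h0 h1 h2].
  have := P2 q0 q4 isT isT h0 h1 isT; apply/negP/negPn/eqP/setP => t.
  rewrite !mem_Iset'; c5 t => //=; by rewrite ?(negbTE h0) ?(negbTE h1) ?(negbTE h2).
move: C1 C2 C3 C4 C5 C6.
case h0 : (q0 \in A); case h1 : (q1 \in A); case h2 : (q2 \in A);
  case h3 : (q3 \in A); case h4 : (q4 \in A) => //= *;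
  first [ by apply: (@three_le _ A q0 q1 q2)
        | by apply: (@three_le _ A q0 q1 q3)
        | by apply: (@three_le _ A q0 q1 q4)
        | by apply: (@three_le _ A q0 q2 q3)
        | by apply: (@three_le _ A q0 q2 q4)
        | by apply: (@three_le _ A q0 q3 q4)
        | by apply: (@three_le _ A q1 q2 q3)
        | by apply: (@three_le _ A q1 q2 q4)
        | by apply: (@three_le _ A q1 q3 q4)
        | by apply: (@three_le _ A q2 q3 q4) ].
Qed.

Lemma eg5_nb0 : onbhd eg5 q0 = [set q2; q3].
Proof. by apply/setP => t; rewrite !inE; c5 t. Qed.
Lemma eg5_nb1 : onbhd eg5 q1 = [set q2; q3].
Proof. by apply/setP => t; rewrite !inE; c5 t. Qed.

Lemma part2 : forall N : nat, exists (T : finType) (e : rel T),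
     simple_graph e /\ connected_graph e /\ subcubic e /\
         N < #|T| /\
         (exists u v : T, open_twins e 2 u v) /\
         #|T| < 2 * gammaLD e.
Proof.
move=> N; exists (TT 'I_5 N), (EE eg5 q2 N).
have lb := @gamma_lb _ eg5 q2 N 3 eg5_lb.
have cT := card_TT 'I_5 N; rewrite card_ord -muln2 in cT.
split; first by split; [exact: EE_sym eg5_sym | exact: EE_irr eg5_irr].
split; first exact: EE_conn eg5_sym eg5_conn.
split; first exact: EE_subcubic eg5_deg.
split; first by rewrite cT; lia.
split; last by rewrite cT; apply: (leq_trans _ (leq_mul (leqnn 2) lb)); lia.
exists (inl q0), (inl q1); split => //.
rewrite !onbhd_inl // eg5_nb0 eg5_nb1; split => //.
by rewrite card_imset ?cards2 //; move=> ? ? [].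
Qed.


Theorem proposition10 :
  (forall N : nat, exists (T : finType) (e : rel T),
     simple_graph e /\ connected_graph e /\ subcubic e /\
         N < #|T| /\
         (exists u v : T, open_twins e 1 u v) /\
         #|T| < 2 * gammaLD e) /\
  (forall N : nat, exists (T : finType) (e : rel T),
     simple_graph e /\ connected_graph e /\ subcubic e /\
         N < #|T| /\
         (exists u v : T, open_twins e 2 u v) /\
         #|T| < 2 * gammaLD e).
Proof. exact: (conj part1 part2). Qed.
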